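(* Let $n=2^k$ with $k>2$ an integer, and let $G=\langle 2^{k-1}-1\rangle$ be the subgroup of $\mathbb{Z}_n^\times$ generated by $2^{k-1}-1$. Then the coset index function $f_G$ is a $(2^k,2^{k-1}+1,\{0,2\})$ zero-difference function.
   Context: For a subgroup $G$ of $\mathbb{Z}_n^\times$ and $r\in\mathbb{Z}_n$, the coset $rG=\{rg\mid g\in G\}$; these cosets partition $\mathbb{Z}_n$, forming a set $D_G$. The coset index function induced by $G$ is $f_G:\mathbb{Z}_n\to\mathbb{Z}_{|D_G|}$, $f_G(x)=h_G(C_x)$, where $C_x$ is the coset containing $x$ and $h_G:D_G\to\mathbb{Z}_{|D_G|}$ is a fixed bijection. A function $f:A\to B$ between finite abelian groups is an $(n,m,S)$ zero-difference function if $n=|A|$, $m=|f(A)|$, and for every nonzero $a\in A$, $|\{x\in A\mid f(x+a)=f(x)\}|\in S$. Here $A=(\mathbb{Z}_n,+)$. *)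

(* Defs.v *)
From mathcomp Require Import all_boot all_order all_algebra all_fingroup.
Set Implicit Arguments. Unset Strict Implicit. Unset Printing Implicit Defensive.
Import GRing.Theory.
Local Open Scope ring_scope.

Definition unit_coset (n : nat) (G : {set {unit 'Z_n}}) (r : 'Z_n) : {set 'Z_n} :=
  [set r * FinRing.uval g | g in G].

Definition coset_set (n : nat) (G : {set {unit 'Z_n}}) : {set {set 'Z_n}} :=
  [set unit_coset G r | r : 'Z_n].

Definition coset_bijection (n : nat) (G : {set {unit 'Z_n}})
    (h : {set 'Z_n} -> 'Z_#|coset_set G|) : Prop :=
  {in coset_set G &, injective h} /\ h @: coset_set G = setT.

Definition coset_index_fun (n : nat) (G : {set {unit 'Z_n}})
    (h : {set 'Z_n} -> 'Z_#|coset_set G|) (x : 'Z_n) : 'Z_#|coset_set G| :=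
  h (unit_coset G x).

Definition zero_difference (A B : finZmodType) (f : A -> B)
    (n m : nat) (S : seq nat) : Prop :=
  [/\ #|A| = n, #|f @: [set: A]| = m &
      forall a : A, a != 0 -> #|[set x : A | f (x + a) == f x]| \in S].

(* Main.v *)
Require Import Defs.
From mathcomp Require Import all_boot all_order all_algebra all_fingroup.
From mathcomp Require Import zify ring.
Import GRing.Theory.
Local Open Scope ring_scope.

Theorem theorem3p4 (k : nat) (hk : (2 < k)%N) (u : {unit 'Z_(2 ^ k)})
    (hu : FinRing.uval u = (2 ^ k.-1 - 1)%N%:R)
    (h : {set 'Z_(2 ^ k)} -> 'Z_#|coset_set <[u]>%g|)
    (hh : coset_bijection h) :
  zero_difference (coset_index_fun h) (2 ^ k) (2 ^ k.-1 + 1) [:: 0%N; 2%N].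
Proof.
have [m [hN [hk1 [m0 modd]]]] : exists m : nat, (2 ^ k = 4 * m /\ 2 ^ k.-1 = 2 * m /\ 0 < m /\ odd m.-1)%N.
  exists (2 ^ (k - 2))%N; case: k hk {u hu h hh} => [|[|[|j]]] //= _.
  rewrite (_ : (j.+3 - 2 = j.+1)%N) // !expnS mulnA; split => //; split => //; split; first by rewrite muln_gt0 expn_gt0.
  by rewrite -subn1 oddB ?muln_gt0 ?expn_gt0 // oddM.
rewrite hk1 in hu *.
have N1 : (1 < 2 ^ k)%N by rewrite hN; lia.
set R := 'Z_(2 ^ k) in u hu h hh *.
have eqZ : forall a b : nat, ((a%:R : R) == b%:R) = (a %% 2 ^ k == b %% 2 ^ k)%N.
  move=> a b; apply/eqP/eqP => [/(congr1 (@nat_of_ord _))|H]; first by rewrite !val_Zp_nat.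
  by apply: ord_inj; rewrite !val_Zp_nat.
have valE : forall x : R, x = (val x)%:R by move=> x; rewrite natr_Zp.
have vlt : forall x : R, (val x < 4 * m)%N by move=> x; apply: leq_trans (ltn_ord x) _; rewrite Zp_cast // hN.
set hR : R := (2 * m)%:R.
have hR0 : hR != 0.
  by rewrite /hR -(mulr0n 1) eqZ mod0n modn_small ?hN; lia.
have hRR : hR * hR = 0.
  rewrite /hR -natrM (_ : (2 * m * (2 * m) = (4 * m) * m)%N); last by lia.
  by rewrite natrM -hN pchar_Zp // mul0r.
have hR2 : hR + hR = 0.
  by rewrite /hR -natrD (_ : (2 * m + 2 * m = 4 * m)%N) -?hN ?pchar_Zp //; lia.
have uE : FinRing.uval u = hR - 1 by rewrite hu natrB //; lia.
have uu : FinRing.uval u * FinRing.uval u = 1.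
  rewrite uE (_ : (hR - 1) * (hR - 1) = hR * hR - (hR + hR) + 1); last by ring.
  by rewrite hRR hR2 subrr add0r.
have cE : FinRing.uval u - 1 = 2%:R * (m.-1)%:R.
  rewrite uE /hR -natrM (_ : (2 * m = (2 * m.-1).+2)%N); last by lia.
  by rewrite !mulrSr !addrK.
have wU : ((m.-1)%:R : R) \is a GRing.unit.
  by rewrite unitZpE // coprime_pexpl ?coprime2n //; lia.
have ker : forall x : R, (x * (FinRing.uval u - 1) == 0) = (x == 0) || (x == hR).
  move=> x; rewrite cE mulrA (mulIr_eq0 _ (mulIr wU)).
  rewrite {1 2 3}(valE x) -natrM -(mulr0n 1) /hR !eqZ mod0n.
  move: (vlt x); move: (val x) => v vl.
  rewrite hN (modn_small vl) (modn_small (_ : 2 * m < 4 * m)%N); last by lia.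
  have [lt|ge] := ltnP (v * 2) (4 * m).
    by rewrite modn_small //; lia.
  rewrite -(subnK ge) modnDr modn_small; lia.
set U := FinRing.uval u in uE uu cE ker.
have cycG : forall g, g \in <[u]>%g -> g = 1%g \/ g = u.
  move=> g /cycleP [i ->]; elim: i => [|i IH]; first by left; rewrite expg0.
  rewrite expgS; case: IH => ->; first by right; rewrite mulg1.
  by left; apply: val_inj; exact: uu.
have CE : forall x, unit_coset <[u]>%g x = [set x; x * U].
  move=> x; apply/setP => y; rewrite in_set2.
  apply/imsetP/orP => [[g /cycG [->|->] ->]|[/eqP->|/eqP->]].
  - by left; rewrite /= mulr1.
  - by right.
  - by exists 1%g; [exact: group1 | rewrite /= mulr1].
  - by exists u; [exact: cycle_id | ].
have Cxu : forall x, x * U * U = x by move=> x; rewrite -mulrA uu mulr1.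
have Ceq : forall x y, (unit_coset <[u]>%g y == unit_coset <[u]>%g x) = (y \in unit_coset <[u]>%g x).
  move=> x y; rewrite !CE; apply/eqP/idP => [<-|]; first by rewrite !inE eqxx.
  rewrite !inE => /orP[/eqP->|/eqP->] //.
  by apply/setP => z; rewrite Cxu !inE orbC.
set D := coset_set <[u]>%g in h hh *.
have DE : D = equivalence_partition (fun x y => y \in unit_coset <[u]>%g x) [set: R].
  apply/setP => C; apply/imsetP/imsetP => [[x _ ->]|[x _ ->]]; exists x => //;
    by apply/setP => y; rewrite !inE.
have partD : partition D [set: R].
  rewrite DE; apply: equivalence_partitionP => x y z _ _ _; split.
    by rewrite CE !inE eqxx.
  by rewrite -Ceq => /eqP ->.
have cardR : #|[set: R]| = (4 * m)%N.
  by rewrite cardsT card_ord; apply: (etrans (Zp_cast N1)).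
have := card_partition partD; rewrite cardR => sumD.
have C0E : unit_coset <[u]>%g 0 = [set 0] by rewrite CE mul0r setUid.
have hU : hR * U = hR.
  by rewrite uE mulrBr hRR mulr1 sub0r; apply/eqP; rewrite eq_sym -addr_eq0 hR2.
have ChE : unit_coset <[u]>%g hR = [set hR] by rewrite CE hU setUid.
have C0D : unit_coset <[u]>%g 0 \in D by apply: imset_f.
have ChD : unit_coset <[u]>%g hR \in D by apply: imset_f.
have ChD' : (unit_coset <[u]>%g hR \in D) && (unit_coset <[u]>%g hR != unit_coset <[u]>%g 0).
  rewrite ChD C0E ChE /=; apply/negP => /eqP /setP /(_ hR).
  by rewrite !inE eqxx (negbTE hR0).
rewrite (bigD1 _ C0D) (bigD1 (unit_coset <[u]>%g hR) ChD') in sumD.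
have c0 : #|unit_coset <[u]>%g 0| = 1%N by rewrite C0E cards1.
have ch : #|unit_coset <[u]>%g hR| = 1%N by rewrite ChE cards1.
rewrite c0 ch in sumD.
have sz2 : forall C, (C \in D) && (C != unit_coset <[u]>%g 0) && (C != unit_coset <[u]>%g hR) -> #|C| = 2%N.
  move=> C /andP [/andP [/imsetP [x _ ->]]]; rewrite !Ceq C0E ChE !inE => x0 xh.
  rewrite CE cards2.
  have : x * (U - 1) != 0 by rewrite ker negb_or x0 xh.
  by rewrite mulrBr mulr1 subr_eq0 eq_sym => ->.
rewrite (eq_bigr (fun _ => 2%N) sz2) sum_nat_const in sumD.
set C0 := unit_coset <[u]>%g 0 in sumD ChD' C0D.
set Ch := unit_coset <[u]>%g hR in sumD ChD' ChD.
have cD : #|D| = (2 * m + 1)%N.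
  have e1 := cardD1 C0 D; have e2 := cardD1 Ch [predD1 D & C0].
  rewrite C0D in e1; rewrite !inE andbC ChD' in e2.
  have e3 : #|[pred i | (i \in D) && (i != C0) && (i != Ch)]| = #|[predD1 [predD1 D & C0] & Ch]|.
    by apply: eq_card => C; rewrite !inE; case: (C \in D); case: (C == C0); case: (C == Ch).
  rewrite e3 in sumD.
  have : (4 * m = 1 + (1 + #|[predD1 [predD1 D & C0] & Ch]| * 2))%N by exact: sumD.
  rewrite /= in e1 e2; clear sumD; move: e1 e2; set X := #|[predD1 [predD1 D & C0] & Ch]|; set Y := #|[predD1 D & C0]|; move=> -> -> H4; lia.
split.
- by rewrite card_ord Zp_cast.
- have -> : coset_index_fun h @: [set: R] = h @: D.
    apply/setP => y; apply/imsetP/imsetP => [[x _ ->]|[C /imsetP[x _ ->] ->]].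
      by exists (unit_coset <[u]>%g x) => //; apply: imset_f.
    by exists x.
  rewrite hh.2 cardsT card_ord Zp_cast // cD; lia.
move=> a a0.
have -> : [set x | coset_index_fun h (x + a) == coset_index_fun h x] = [set x | x * (U - 1) == a].
  apply/setP => x; rewrite !inE /coset_index_fun.
  rewrite (inj_in_eq hh.1) ?imset_f // Ceq CE !inE.
  rewrite -{2}(addr0 x) (inj_eq (addrI x)) (negbTE a0) /=.
  by rewrite mulrBr mulr1 subr_eq addrC eq_sym.
case: (pickP (fun x => x * (U - 1) == a)) => [x0 /eqP Hx0 | none].
  have -> : [set x | x * (U - 1) == a] = [set x0; x0 + hR].
    apply/setP => y; rewrite !inE -Hx0 -subr_eq0 -mulrBl ker subr_eq0 subr_eq (addrC hR).
    done.
  by rewrite cards2 -{1}(addr0 x0) (inj_eq (addrI x0)) eq_sym hR0.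
have -> : [set x | x * (U - 1) == a] = set0 by apply/setP => y; rewrite !inE none.
by rewrite cards0.
Qed.
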